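(* Let $\beta\in\mathbb{F}_{p^m}\setminus\{0\}$ and $\mathcal{R}_{\alpha,\beta}=R[x]/\langle x^{4p^s}-(\alpha+\beta u)\rangle$. Let $P(x)=ax^3+bx^2+cx+d\in\mathbb{F}_{p^m}[x]$ be a nonzero polynomial. Then $P(x)$ is a unit in $\mathcal{R}_{\alpha,\beta}$ if and only if $$P(x)\notin \left\langle x^2+\gamma x+\tfrac{\gamma^2}{2}\right\rangle\cup\left\langle x^2-\gamma x+\tfrac{\gamma^2}{2}\right\rangle$$ (ideals of $\mathcal{R}_{\alpha,\beta}$). As a consequence, $\langle x^4-\alpha_0\rangle\subsetneq\langle x^2+\gamma x+\frac{\gamma^2}{2}\rangle$ and $\langle x^4-\alpha_0\rangle\subsetneq\langle x^2-\gamma x+\frac{\gamma^2}{2}\rangle$ in $\mathcal{R}_{\alpha,\beta}$.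
   Context: Let $p$ be an odd prime and $m,s$ positive integers with $p^m\equiv 3\pmod 4$; $\mathbb{F}_{p^m}$ is the field with $p^m$ elements and $R=\mathbb{F}_{p^m}[u]/\langle u^2\rangle$. Fix $\alpha\in\mathbb{F}_{p^m}\setminus\{0\}$ that is not a square in $\mathbb{F}_{p^m}$, let $\alpha_0\in\mathbb{F}_{p^m}$ satisfy $\alpha_0^{p^s}=\alpha$, and let $\gamma\in\mathbb{F}_{p^m}$ satisfy $\gamma^4+4\alpha_0=0$. *)

(* Defs.v *)
From HB Require Import structures.
From mathcomp Require Import all_boot all_order all_algebra all_field.
Set Implicit Arguments. Unset Strict Implicit. Unset Printing Implicit Defensive.
Import GRing.Theory.
Local Open Scope ring_scope.

(* Elements of R[x], R = F[u]/<u^2>, and of R_{alpha,beta} are represented by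
   bivariate polynomials in F[x][u] : {poly {poly F}}.  The OUTER variable
   'X of {poly {poly F}} is u; the inner variable (('X : {poly F})%:P) is x.
   R_{alpha,beta} = F[x,u] / < u^2 , x^N - (alpha + beta u) >. *)

Definition liftx (F : fieldType) (f : {poly F}) : {poly {poly F}} := f%:P.

Definition Rab_mod (F : fieldType) (N : nat) (alpha beta : F) : {poly {poly F}} :=
  liftx ('X^N - alpha%:P) - liftx (beta%:P) * 'X.

Definition in_ideal_Rab (F : fieldType) (N : nat) (alpha beta : F)
  (g f : {poly {poly F}}) : Prop :=
  exists h q1 q2 : {poly {poly F}},
    f = g * h + q1 * 'X^2 + q2 * Rab_mod N alpha beta.

Definition unit_Rab (F : fieldType) (N : nat) (alpha beta : F)
  (f : {poly {poly F}}) : Prop :=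
  exists h q1 q2 : {poly {poly F}},
    f * h = 1 + q1 * 'X^2 + q2 * Rab_mod N alpha beta.

Definition ideal_proper_Rab (F : fieldType) (N : nat) (alpha beta : F)
  (g1 g2 : {poly {poly F}}) : Prop :=
  (forall f, in_ideal_Rab N alpha beta g1 f -> in_ideal_Rab N alpha beta g2 f) /\
  (exists f, in_ideal_Rab N alpha beta g2 f /\ ~ in_ideal_Rab N alpha beta g1 f).

(* Main.v *)
Require Import Defs.
From HB Require Import structures.
From mathcomp Require Import all_boot all_order all_algebra all_field.
From mathcomp Require Import ring.
Import GRing.Theory.
Local Open Scope ring_scope.

Section S.
Variable F : fieldType.
Implicit Types f g : {poly F}.

Lemma ev_ideal N alpha beta g f :
  in_ideal_Rab N alpha beta (liftx g) (liftx f) ->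
  exists h q, f = g * h + q * ('X^N - alpha%:P).
Proof.
case=> h [q1 [q2 E]]; have := congr1 (horner^~ 0) E.
rewrite /Rab_mod /liftx !(hornerD, hornerM, hornerC, hornerX, hornerXn, hornerN) !mulr0 addr0 subr0 => ->.
by exists h.[0], q2.[0].
Qed.

Lemma ev_unit N alpha beta f :
  unit_Rab N alpha beta (liftx f) ->
  exists h q, f * h = 1 + q * ('X^N - alpha%:P).
Proof.
case=> h [q1 [q2 E]]; have := congr1 (horner^~ 0) E.
rewrite /Rab_mod /liftx !(hornerD, hornerM, hornerC, hornerX, hornerXn, hornerN) !mulr0 addr0 subr0 => E0.
exists h.[0], q2.[0]; exact: E0.
Qed.

Lemma ideal_dvd N alpha beta g f :
  g %| 'X^N - alpha%:P -> in_ideal_Rab N alpha beta (liftx g) (liftx f) -> g %| f.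
Proof.
move=> gM /ev_ideal [h [q ->]].
by apply: dvdp_add; [exact: dvdp_mulIl | exact: dvdp_mull].
Qed.

Lemma unit_ndvd N alpha beta g f :
  (1 < size g)%N -> g %| 'X^N - alpha%:P -> unit_Rab N alpha beta (liftx f) ->
  in_ideal_Rab N alpha beta (liftx g) (liftx f) -> False.
Proof.
move=> sg gM /ev_unit [h [q E]] /(@ideal_dvd _ _ _ _ _ gM) gf.
have : g %| 1.
  have -> : (1 : {poly F}) = f * h - q * ('X^N - alpha%:P) by rewrite E; ring.
  by apply: dvdp_sub; [exact: dvdp_mulr | exact: dvdp_mull].
by rewrite dvdp1 => /eqP sg1; rewrite sg1 in sg.
Qed.

Lemma coprime_unit N alpha beta f :
  coprimep f ('X^N - alpha%:P) -> unit_Rab N alpha beta (liftx f).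
Proof.
case/Bezout_eq1_coprimepP => [[a b]] /= E.
set M := 'X^N - alpha%:P in E *.
have E' : liftx f * liftx a = 1 - liftx b * liftx M.
  have := congr1 (@polyC _) E; rewrite rmorphD !rmorphM rmorph1 /= => E1.
  by rewrite /liftx -E1; ring.
set e := liftx b * liftx beta%:P * 'X.
exists (liftx a * (1 + e)), (- ((liftx b * liftx beta%:P) ^+ 2)), (- (liftx b * (1 + e))).
rewrite mulrA E' /Rab_mod -/M /e; ring.
Qed.

Lemma irr_coprime g f : irreducible_poly g -> ~~ (g %| f) -> coprimep f g.
Proof.
move=> irr ngf; rewrite coprimep_def; case: (eqVneq (size (gcdp f g)) 1%N) => // H.
have /eqp_dvdl e := irr (gcdp f g) H (dvdp_gcdr f g).
by rewrite -e dvdp_gcdl in ngf.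
Qed.

Lemma dvd_ideal N alpha beta g f :
  g %| f -> in_ideal_Rab N alpha beta (liftx g) (liftx f).
Proof.
move=> gf; exists (liftx (f %/ g)), 0, 0.
by rewrite !mul0r !addr0 /liftx -rmorphM mulrC divpK.
Qed.

End S.

Theorem proposition3p2 (F : finFieldType) (p m s : nat)
  (alpha alpha0 gamma beta a b c d : F) :
  prime p -> odd p -> (0 < m)%N -> (0 < s)%N ->
  #|F| = (p ^ m)%N -> (p ^ m %% 4 = 3)%N ->
  alpha != 0 -> (forall y : F, y ^+ 2 != alpha) ->
  alpha0 ^+ (p ^ s) = alpha ->
  gamma ^+ 4 + 4%:R * alpha0 = 0 ->
  beta != 0 ->
  let N := (4 * p ^ s)%N in
  let P : {poly F} := a *: 'X^3 + b *: 'X^2 + c *: 'X + d%:P in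
  let g1 : {poly F} := 'X^2 + gamma *: 'X + (gamma ^+ 2 / 2%:R)%:P in
  let g2 : {poly F} := 'X^2 - gamma *: 'X + (gamma ^+ 2 / 2%:R)%:P in
  P != 0 ->
  (unit_Rab N alpha beta (liftx P) <->
     ~ (in_ideal_Rab N alpha beta (liftx g1) (liftx P) \/
        in_ideal_Rab N alpha beta (liftx g2) (liftx P)))
  /\ ideal_proper_Rab N alpha beta (liftx ('X^4 - alpha0%:P)) (liftx g1)
  /\ ideal_proper_Rab N alpha beta (liftx ('X^4 - alpha0%:P)) (liftx g2).
Proof.
move=> pp podd m0 s0 cardF card4 a0 _ a0a g4 b0 N P g1 g2 _.
have pc : p \in [pchar F] by exact: card_finPcharP cardF pp.
have two0 : (2%:R : F) != 0.
  rewrite -(dvdn_pcharf pc); apply/negP => /(dvdn_leq (isT : (0 < 2)%N)) H.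
  have e : p = 2%N by apply/eqP; rewrite eqn_leq H prime_gt1.
  by rewrite e in podd.
have four0 : (4%:R : F) != 0 by rewrite (_ : 4 = 2 * 2)%N // natrM mulf_neq0.
have g0 : gamma != 0.
  apply/eqP => g0; move: g4; rewrite g0 expr0n /= add0r => /eqP.
  rewrite mulf_eq0 (negPf (_ : 4%:R != 0 :> F)) /=.
    have ps0 : (p ^ s != 0)%N by rewrite -lt0n expn_gt0 prime_gt0.
    by move/eqP => e; move: a0; rewrite -a0a e expr0n (negPf ps0) eqxx.
  exact: four0.
have pn : [pchar {poly F}].-nat (p ^ s)%N.
  by rewrite pnatX (pnatE _ pp) pchar_poly pc.
have hM : 'X^N - alpha%:P = ('X^4 - alpha0%:P) ^+ (p ^ s).
  rewrite exprDn_pchar // exprNn_pchar // -exprM -polyC_exp a0a.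
  by rewrite /N mulnC.
have hfac : g1 * g2 = 'X^4 - alpha0%:P.
  rewrite /g1 /g2 -!mul_polyC.
  set G := gamma%:P; set C := (gamma ^+ 2 / 2%:R)%:P.
  have hC1 : C + C = G * G.
    by rewrite -polyCD -polyCM; congr (_%:P); field.
  have hC2 : C * C = - alpha0%:P.
    rewrite -polyCM -polyCN; congr (_%:P).
    have e4 : alpha0 = - (gamma ^+ 4 / 4%:R).
      apply: (mulfI four0); rewrite mulrN mulrCA divff // mulr1.
      by apply/eqP; rewrite -addr_eq0 addrC g4.
    by rewrite e4 opprK; field; rewrite four0 two0.
  have -> : ('X^2 + G * 'X + C) * ('X^2 - G * 'X + C) =
     'X^4 + (C + C - G * G) * 'X^2 + C * C by ring.
  by rewrite hC1 hC2 subrr mul0r addr0.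
have neg1 : forall y : F, y ^+ 2 != -1.
  move=> y; apply/eqP => hy.
  have y4 : y ^+ 4 = 1 by rewrite (_ : 4 = 2 * 2)%N // exprM hy sqrrN expr1n.
  have := expf_card y; rewrite cardF (divn_eq (p ^ m) 4) card4 exprD exprM exprAC y4.
  rewrite expr1n mul1r (_ : 3 = 1 + 2)%N // exprD expr1 hy => e.
  have h2 : y *+ 2 = 0 by rewrite mulr2n -{1}e mulrN1 addNr.
  rewrite -mulr_natl in h2; move/eqP: h2; rewrite mulf_eq0 (negPf two0) /= => /eqP y0.
  by move/eqP: hy; rewrite y0 expr0n /= eq_sym oppr_eq0 oner_eq0.
have sz : forall e, size ('X^2 + e *: 'X + (gamma ^+ 2 / 2%:R)%:P) = 3%N.
    move=> e; rewrite -addrA size_polyDl size_polyXn //.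
    rewrite (leq_ltn_trans (size_polyD _ _)) // gtn_max.
    rewrite (leq_ltn_trans (size_scale_leq _ _)) ?size_polyX //.
    exact: (leq_ltn_trans (size_polyC_leq1 _)).
have irr : forall e, e ^+ 2 = gamma ^+ 2 ->
    irreducible_poly ('X^2 + e *: 'X + (gamma ^+ 2 / 2%:R)%:P).
  move=> e he; apply: cubic_irreducible; first by rewrite sz.
  move=> x; apply/negP; rewrite rootE !hornerE => /eqP hx.
  have key : ((2%:R * x + e) / gamma) ^+ 2 = -1 + 4%:R / gamma ^+ 2 *
      (x ^+ 2 + e * x + gamma ^+ 2 / 2%:R) + (e ^+ 2 - gamma ^+ 2) / gamma ^+ 2.
    by field; rewrite g0 two0.
  rewrite hx he subrr mul0r mulr0 !addr0 in key.
  by move/eqP: key; rewrite (negPf (neg1 _)).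
have irr1 : irreducible_poly g1 by exact: irr.
have irr2 : irreducible_poly g2 by rewrite /g2 -scaleNr; apply: irr; rewrite sqrrN.
have sz1 : size g1 = 3%N by exact: sz.
have sz2 : size g2 = 3%N by rewrite /g2 -scaleNr sz.
have hX : ('X^4 - alpha0%:P) %| 'X^N - alpha%:P.
  by rewrite hM dvdp_exp ?expn_gt0 ?prime_gt0 // dvdpp.
have hg1 : g1 %| 'X^N - alpha%:P by apply: dvdp_trans hX; rewrite -hfac dvdp_mulIl.
have hg2 : g2 %| 'X^N - alpha%:P by apply: dvdp_trans hX; rewrite -hfac dvdp_mulIr.
have prop : forall g g', g * g' = 'X^4 - alpha0%:P -> size g = 3%N ->
    ideal_proper_Rab N alpha beta (liftx ('X^4 - alpha0%:P)) (liftx g).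
  move=> g g' hgg sg; split.
    move=> f [h [q1 [q2 ->]]]; exists (liftx g' * h), q1, q2.
    by rewrite -hgg /liftx rmorphM mulrA.
  exists (liftx g); split; first by exists 1, 0, 0; rewrite !mul0r !addr0 mulr1.
  have gn0 : g != 0 by rewrite -size_poly_gt0 sg.
  by move/(@ideal_dvd F N alpha beta _ _ hX)/(dvdp_leq gn0); rewrite size_XnsubC // sg.
split; last by split; [exact: (prop g1 g2 hfac sz1) | apply: (prop g2 g1 _ sz2); rewrite mulrC].
split.
  move=> U [H|H].
    by apply: (@unit_ndvd F N alpha beta g1 P _ hg1 U H); rewrite sz1.
  by apply: (@unit_ndvd F N alpha beta g2 P _ hg2 U H); rewrite sz2.
move=> nH; apply: coprime_unit; rewrite hM; apply: coprimep_expr.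
rewrite -hfac coprimepMr; apply/andP; split; apply: irr_coprime => //;
  apply/negP => /(@dvd_ideal F N alpha beta) ?; apply: nH; by [left|right].
Qed.
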